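(* Let $(\mathcal S,\mathcal A,P,R,d_0)$ be a finite episodic MDP with horizon $T$ and $\pi_\theta$ a parameterized policy satisfying the score bound described in the context. Then there exists a finite constant $L_d$ such that for all $s\in\mathcal S$ (and all $\theta$), $$\Big\|\frac{\partial}{\partial\theta}\sum_{t=1}^{T-1}\Pr(S_t=s\mid\pi=\pi_\theta)\Big\|\le L_d.$$
   Context: Setting: $\mathcal S$ is a finite set of states, $\mathcal A$ a finite set of actions, $P(s'\mid s,a)$ a transition function, $d_0$ an initial state distribution. An episode runs as follows: $S_0\sim d_0$; at each time $t$, $A_t\sim\pi_\theta(\cdot\mid S_t)$, $S_{t+1}\sim P(\cdot\mid S_t,A_t)$; the horizon is $T$. The policy $\pi_\theta(a\mid s)$ is positive and differentiable in $\theta\in\mathbb R^n$, and there is a constant $L_\pi$ such that for all $\theta$, $s\in\mathcal S$, $a\in\mathcal A$: $\big\|\frac{\partial}{\partial\theta}\ln\pi_\theta(a\mid s)\big\|\le L_\pi$. *)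

(* Defs.v *)
From HB Require Import structures.
From mathcomp Require Import all_boot all_order all_algebra.
From mathcomp Require Import all_classical all_reals all_analysis.
Set Implicit Arguments. Unset Strict Implicit. Unset Printing Implicit Defensive.
Import Order.TTheory GRing.Theory Num.Theory.
Import numFieldNormedType.Exports.
Local Open Scope ring_scope.

Definition grad (R : realType) (n : nat) (f : 'rV[R]_n -> R) (th : 'rV[R]_n)
  : 'rV[R]_n :=
  \row_(i < n) derive f th (delta_mx 0 i).

Definition l2norm (R : realType) (n : nat) (v : 'rV[R]_n) : R :=
  Num.sqrt (\sum_(i < n) (v 0 i) ^+ 2).

(* Marginal state distribution Pr(S_t = s | pi) of the episode
   S_0 ~ d0, A_t ~ pi(.|S_t), S_{t+1} ~ P(.|S_t,A_t). *)
Fixpoint state_dist (R : realType) (S A : finType) (P : S -> A -> S -> R)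
  (d0 : S -> R) (pol : S -> A -> R) (t : nat) (s' : S) : R :=
  match t with
  | 0%N => d0 s'
  | t.+1 => \sum_(s : S) \sum_(a : A)
             state_dist P d0 pol t s * pol s a * P s a s'
  end.

(* Main.v *)
Require Import Defs.
From HB Require Import structures.
From mathcomp Require Import all_boot all_order all_algebra.
From mathcomp Require Import all_classical all_reals all_analysis.
Import Order.TTheory GRing.Theory Num.Theory.
Import numFieldNormedType.Exports.
Local Open Scope ring_scope.

Section H.
Context {R : realType}.
Context {n : nat}.
Implicit Types (x v : 'rV[R]_n).

Lemma is_derive_big (I : Type) (r : seq I) (Pr : pred I)
  (h : I -> 'rV[R]_n -> R) x v (dh : I -> R) :
  (forall i, Pr i -> is_derive x v (h i) (dh i)) ->
  is_derive x v (\sum_(i <- r | Pr i) h i) (\sum_(i <- r | Pr i) dh i).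
Proof.
move=> H; elim/big_ind2 : _ => //; first exact: is_derive_cst.
by move=> *; exact: is_deriveD.
Qed.

Lemma le_sum_term (I : finType) (F : I -> R) i :
  (forall j, 0 <= F j) -> F i <= \sum_j F j.
Proof.
move=> H; rewrite (bigD1 i) //= lerDl; exact: sumr_ge0.
Qed.

Lemma coord_le_l2 (w : 'rV[R]_n) i : `|w 0 i| <= l2norm w.
Proof.
rewrite /l2norm -sqrtr_sqr ler_wsqrtr //.
by apply: le_sum_term => j; exact: sqr_ge0.
Qed.

Lemma l2_le (w : 'rV[R]_n) K : (forall i, `|w 0 i| <= K) ->
  l2norm w <= Num.sqrt (\sum_(i < n) K ^+ 2).
Proof.
move=> H; rewrite /l2norm ler_wsqrtr // ler_sum // => i _.
rewrite -real_normK ?num_real //; apply: lerXn2r; rewrite ?inE //.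
exact: (le_trans _ (H i)).
Qed.

Lemma derive_ln_comp (f : 'rV[R]_n -> R) x v :
  differentiable f x -> 0 < f x ->
  'D_v (fun y => ln (f y)) x = 'D_v f x / f x.
Proof.
move=> df fx.
have dln : differentiable (@ln R) (f x).
  by apply/derivable1_diffP; case: (is_derive1_ln fx).
rewrite (deriveE _ (differentiable_comp df dln)) diff_comp // /=.
rewrite diff1E // derive1E.
have [_ ->] := is_derive1_ln fx.
by rewrite deriveE.
Qed.

Lemma is_derive_term (a b : 'rV[R]_n -> R) (c : R) x v da db :
  is_derive x v a da -> is_derive x v b db ->
  is_derive x v (fun y => a y * b y * c) (c * (a x * db + b x * da)).
Proof.
move=> ha hb.
have h := is_deriveM (is_deriveM ha hb) (is_derive_cst c x v).
apply: is_derive_eq h _.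
by rewrite /= scaler0 add0r /GRing.scale /=.
Qed.
End H.

Theorem corollary2 (R : realType) (S A : finType)
  (P : S -> A -> S -> R) (d0 : S -> R) (T n : nat)
  (pi : 'rV[R]_n -> S -> A -> R) (L_pi : R)
  (HP0 : forall s a s', 0 <= P s a s')
  (HP1 : forall s a, \sum_(s' : S) P s a s' = 1)
  (Hd00 : forall s, 0 <= d0 s)
  (Hd01 : \sum_(s : S) d0 s = 1)
  (Hpi_pos : forall th s a, 0 < pi th s a)
  (Hpi_sum : forall th s, \sum_(a : A) pi th s a = 1)
  (Hpi_diff : forall th s a, differentiable (fun th' => pi th' s a) th)
  (Hscore : forall th s a,
     l2norm (grad (fun th' => ln (pi th' s a)) th) <= L_pi) :
  exists L_d : R, forall (s : S) (th : 'rV[R]_n),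
    l2norm (grad (fun th' => \sum_(1 <= t < T) state_dist P d0 (pi th') t s) th)
      <= L_d.
Proof.
set L := L_pi.
have pi_le1 : forall th s a, pi th s a <= 1.
  move=> th s a; rewrite -(Hpi_sum th s); apply: le_sum_term => b.
  exact: ltW.
have P_le1 : forall s a s', P s a s' <= 1.
  by move=> s a s'; rewrite -(HP1 s a); apply: le_sum_term.
have d0_le1 : forall s, d0 s <= 1.
  by move=> s; rewrite -Hd01; apply: le_sum_term.
have Dpi : forall i th s a,
    `|'D_(delta_mx 0 i) (fun th' => pi th' s a) th| <= L.
  move=> i th s a.
  have h1 := le_trans (coord_le_l2 (grad (fun th' => ln (pi th' s a)) th) i) (Hscore th s a).
  rewrite /grad mxE derive_ln_comp // in h1.
  have hp := Hpi_pos th s a.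
  have -> : 'D_(delta_mx 0 i) (fun th' => pi th' s a) th =
     'D_(delta_mx 0 i) (fun th' => pi th' s a) th / pi th s a * pi th s a.
    by rewrite divfK // gt_eqF.
  rewrite normrM (gtr0_norm hp).
  rewrite -[L]mulr1; apply: ler_pM => //; exact: ltW.
pose Bf := fix Bf (t : nat) : R :=
  if t is t'.+1 then \sum_(s : S) \sum_(a : A) Bf t' else 1.
pose Cf := fix Cf (t : nat) : R :=
  if t is t'.+1 then \sum_(s : S) \sum_(a : A) (Bf t' * L + Cf t') else 0.
have claim : forall t i th s,
   derivable (fun th' => state_dist P d0 (pi th') t s) th (delta_mx 0 i) /\
   `|state_dist P d0 (pi th) t s| <= Bf t /\
   `|'D_(delta_mx 0 i) (fun th' => state_dist P d0 (pi th') t s) th| <= Cf t.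
  elim=> [|t IH] i th s.
    split; first exact: derivable_cst.
    split; first by rewrite /= ger0_norm.
    by rewrite /= (derive_cst (d0 s)) normr0.
  set v := delta_mx 0 i.
  pose dF := \sum_(s0 : S) \sum_(a : A) (P s0 a s *
     (state_dist P d0 (pi th) t s0 * 'D_v (fun th' => pi th' s0 a) th +
      pi th s0 a * 'D_v (fun th' => state_dist P d0 (pi th') t s0) th)).
  have hF : is_derive th v (fun th' => state_dist P d0 (pi th') t.+1 s) dF.
    have -> : (fun th' => state_dist P d0 (pi th') t.+1 s) =
      \sum_(s0 : S) \sum_(a : A)
         (fun th' => state_dist P d0 (pi th') t s0 * pi th' s0 a * P s0 a s).
      apply/funext => y /=; rewrite fct_sumE; apply: eq_bigr => s0 _.
      by rewrite fct_sumE.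
    apply: is_derive_big => s0 _; apply: is_derive_big => a _.
    apply: is_derive_term; apply: derivableP.
      exact: (IH i th s0).1.
    exact: diff_derivable.
  split; first by case: hF.
  split.
    rewrite /=; apply: (le_trans (ler_norm_sum _ _ _)); apply: ler_sum => s0 _.
    apply: (le_trans (ler_norm_sum _ _ _)); apply: ler_sum => a _.
    rewrite !normrM -[Bf t]mulr1 -[Bf t * 1]mulr1.
    apply: ler_pM => //; last by rewrite ger0_norm.
    apply: ler_pM => //; first exact: (IH i th s0).2.1.
    by rewrite gtr0_norm.
  rewrite derive_val.
  apply: (le_trans (ler_norm_sum _ _ _)); apply: ler_sum => s0 _.
  apply: (le_trans (ler_norm_sum _ _ _)); apply: ler_sum => a _.
  rewrite normrM -[_ + Cf t]mul1r.
  apply: ler_pM => //; first by rewrite ger0_norm.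
  apply: (le_trans (ler_normD _ _)); apply: lerD.
    rewrite normrM; apply: ler_pM => //; first exact: (IH i th s0).2.1.
    exact: Dpi.
  rewrite normrM -[Cf t]mul1r; apply: ler_pM => //.
    by rewrite gtr0_norm.
  exact: (IH i th s0).2.2.
pose K := \sum_(1 <= t < T) Cf t.
exists (Num.sqrt (\sum_(i < n) K ^+ 2)) => s th.
apply: l2_le => i; rewrite /grad mxE.
set v := delta_mx 0 i.
have hG : is_derive th v
   (fun th' => \sum_(1 <= t < T) state_dist P d0 (pi th') t s)
   (\sum_(1 <= t < T) 'D_v (fun th' => state_dist P d0 (pi th') t s) th).
  rewrite -fct_sumE; apply: is_derive_big => t _; apply: derivableP.
  exact: (claim t i th s).1.
rewrite derive_val; apply: (le_trans (ler_norm_sum _ _ _)); apply: ler_sum => t _.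
exact: (claim t i th s).2.2.
Qed.
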